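(* Let $\mathcal F$ be a family of finite graphs and let $\mathrm{Forb}^+_{T_{\mathrm{Graph}}}(\mathcal F)$ be the theory of all graphs that contain no non-induced copy of any member of $\mathcal F$. For the axiom-adding interpretation $I^+_{\mathcal F}\colon T_{\mathrm{Graph}}\leadsto\mathrm{Forb}^+_{T_{\mathrm{Graph}}}(\mathcal F)$ (acting identically on $E$), we have $$\chi(I^+_{\mathcal F})=\max\{\chi(\mathcal F),1\},$$ where $\chi(\mathcal F)=\inf\{\chi(F):F\in\mathcal F\}$ (the infimum of the usual chromatic numbers, $\inf\varnothing=\infty$).
   Context: A graph $G$ contains a non-induced copy of $F$ ($F\subseteq G$) if there is an injection $V(F)\to V(G)$ mapping edges to edges. For the interpretation $I=I^+_{\mathcal F}$ and $T=\mathrm{Forb}^+_{T_{\mathrm{Graph}}}(\mathcal F)$, $I(N)=N$ and the abstract chromatic number is $\chi(I)=\sup(\{\ell\in\mathbb{N}_+:\forall n\in\mathbb{N}\ \exists N\in\mathcal M_n[T],\ T_{n,\ell}\subseteq I(N)\}\cup\{0\})+1$, where $\mathcal M_n[T]$ is the set of $n$-vertex models of $T$ up to isomorphism and $T_{n,\ell}$ is the complete $\ell$-partite graph on $n$ vertices with parts of sizes $\lfloor n/\ell\rfloor$ or $\lceil n/\ell\rceil$. *)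

(* Defs.v *)
From HB Require Import structures.
From mathcomp Require Import all_boot all_order all_algebra.
From mathcomp Require Import boolp classical_sets reals constructive_ereal ereal.
Set Implicit Arguments. Unset Strict Implicit. Unset Printing Implicit Defensive.
Import Order.TTheory GRing.Theory Num.Theory.
Local Open Scope classical_set_scope.

Record sgraph := FGraph {
  fg_n : nat;
  fg_adj : rel 'I_fg_n;
  fg_sym : symmetric fg_adj;
  fg_irr : irreflexive fg_adj }.

Definition subgraph (n m : nat) (a : rel 'I_n) (b : rel 'I_m) : Prop :=
  exists f : 'I_n -> 'I_m, injective f /\ forall x y, a x y -> b (f x) (f y).

(* An n-vertex model of Forb^+_{T_Graph}(Fam): a simple graph on 'I_n
   containing no non-induced copy of any member of Fam. *)
Definition forb_model (Fam : sgraph -> Prop) (n : nat) (a : rel 'I_n) : Prop :=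
  [/\ symmetric a, irreflexive a & forall F, Fam F -> ~ @subgraph (fg_n F) n (@fg_adj F) a].

(* Turan graph T_{n,l}: parts are residue classes mod l (sizes floor/ceil n/l). *)
Definition turan (n l : nat) : rel 'I_n := fun x y => (x %% l != y %% l)%N.

Definition chiI_set (Fam : sgraph -> Prop) : set nat :=
  [set l | (0 < l)%N /\ forall n, exists a : rel 'I_n, forb_model Fam a /\ @subgraph n n (@turan n l) a].

Definition chiI (R : realType) (Fam : sgraph -> Prop) : \bar R :=
  (ereal_sup ([set (l%:R)%:E | l in chiI_set Fam] `|` [set 0%E]) + 1)%E.

Definition colorable (n : nat) (a : rel 'I_n) (k : nat) : bool :=
  [exists f : {ffun 'I_n -> 'I_k}, [forall x, [forall y, a x y ==> (f x != f y)]]].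

Lemma colorable_self (G : sgraph) : exists k, @colorable (fg_n G) (@fg_adj G) k.
Proof.
exists (fg_n G); apply/existsP; exists [ffun x => x].
apply/forallP => x; apply/forallP => y; apply/implyP => hxy; rewrite !ffunE.
by apply/eqP => exy; move: hxy; rewrite exy (@fg_irr G).
Qed.

Definition chromatic (G : sgraph) : nat := ex_minn (@colorable_self G).

Definition chiF (R : realType) (Fam : sgraph -> Prop) : \bar R :=
  ereal_inf [set ((chromatic G)%:R)%:E | G in Fam].

(* Main.v *)
Require Import Defs.
From HB Require Import structures.
From mathcomp Require Import all_boot all_order all_algebra.
From mathcomp Require Import boolp classical_sets reals constructive_ereal ereal.
Set Implicit Arguments. Unset Strict Implicit. Unset Printing Implicit Defensive.
Import Order.TTheory GRing.Theory Num.Theory.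

Lemma chrom_col (G : sgraph) : colorable (@fg_adj G) (chromatic G).
Proof. by rewrite /chromatic; case: ex_minnP. Qed.

Lemma chrom_min (G : sgraph) k : colorable (@fg_adj G) k -> (chromatic G <= k)%N.
Proof. by rewrite /chromatic; case: ex_minnP => m _ H /H. Qed.

Lemma sub_turan_col n m (a : rel 'I_n) l : (0 < l)%N ->
  subgraph a (@turan m l) -> colorable a l.
Proof.
move=> l0 [f [_ Hf]]; apply/existsP.
exists [ffun x => Ordinal (ltn_pmod (f x) l0)].
apply/forallP => x; apply/forallP => y; apply/implyP => hxy; rewrite !ffunE.
by have := Hf _ _ hxy; rewrite /turan; apply: contra => /eqP [->].
Qed.

Lemma col_sub_turan m (a : rel 'I_m) k l : colorable a k -> (k <= l)%N ->
  subgraph a (@turan (m * l) l).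
Proof.
move=> /existsP [c /forallP Hc] kl.
case: (posnP m) => [m0|m0].
  by subst m; exists (fun v : 'I_0 => v); split; case.
have l0 : (0 < l)%N by case: (c (Ordinal m0)) => i ik; exact: leq_ltn_trans (leq0n i) (leq_trans ik kl).
have cl : forall v, (c v < l)%N by move=> v; apply: leq_trans (ltn_ord _) kl.
have bnd : forall v : 'I_m, (v * l + c v < m * l)%N.
  move=> v; apply: (@leq_trans ((v.+1) * l)); first by rewrite mulSn addnC ltn_add2r.
  by rewrite leq_mul2r ltn_ord orbT.
have modE : forall v : 'I_m, (v * l + c v) %% l = c v.
  by move=> v; rewrite modnMDl modn_small.
have divE : forall v : 'I_m, (v * l + c v) %/ l = v.
  by move=> v; rewrite divnMDl // divn_small // addn0.
exists (fun v => Ordinal (bnd v)); split.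
  move=> u v [] e; apply: val_inj => /=.
  by rewrite -(divE u) -(divE v) e.
move=> x y hxy; rewrite /turan /= !modE.
by have := Hc x => /forallP /(_ y) /implyP /(_ hxy).
Qed.

Lemma subgraph_trans n m p (a : rel 'I_n) (b : rel 'I_m) (c : rel 'I_p) :
  subgraph a b -> subgraph b c -> subgraph a c.
Proof.
move=> [f [fi Hf]] [g [gi Hg]]; exists (g \o f); split.
  exact: inj_comp.
by move=> x y /Hf /Hg.
Qed.

Lemma chiI_setE (Fam : sgraph -> Prop) l :
  chiI_set Fam l <-> (0 < l)%N /\ forall G, Fam G -> (l < chromatic G)%N.
Proof.
split.
  move=> [l0 H]; split => // G FG; rewrite ltnNge; apply/negP => kl.
  have [a [[_ _ Hf] Hs]] := H (fg_n G * l)%N.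
  apply: (Hf G FG); apply: subgraph_trans Hs.
  exact: col_sub_turan (chrom_col G) kl.
move=> [l0 H]; split => // n; exists (@turan n l); split; last first.
  by exists id; split.
split.
- by move=> x y; rewrite /turan eq_sym.
- by move=> x; rewrite /turan eqxx.
- move=> F FF /(sub_turan_col l0) /chrom_min; rewrite leqNgt.
  by rewrite H.
Qed.


Theorem proposition8p1 (R : realType) (Fam : sgraph -> Prop) :
  chiI R Fam = Order.max (chiF R Fam) 1%E.
Proof.
rewrite /chiI /chiF.
case: (pselect (exists G, Fam G)) => [hex|hne]; last first.
  have noF : forall G, ~ Fam G by move=> G FG; apply: hne; exists G.
  have -> : ereal_inf [set ((chromatic G)%:R)%:E | G in Fam]%classic = +oo%E :> \bar R.
    by apply: (proj2 (ereal_inf_pinfty _)) => x [G FG _]; case: (noF G FG).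
  rewrite max_l ?leey //.
  set T := (X in ereal_sup X).
  have inT : forall l, (0 < l)%N -> T (l%:R)%:E.
    move=> l l0; left; exists l => //; apply/chiI_setE; split => // G FG.
    by case: (noF G FG).
  case E: (ereal_sup T) => [r| |] //.
  - pose l := (Num.bound `|r|).+1.
    have := ereal_sup_ubound (inT l erefl); rewrite E lee_fin => hl.
    have := archi_boundP (normr_ge0 r).
    move=> h; have : (`|r| < l%:R)%R.
      apply: lt_le_trans h _; rewrite ler_nat; exact: leqnSn.
    move=> h2; have := le_lt_trans (ler_norm r) h2.
    by rewrite ltNge hl.
  - have := ereal_sup_ubound (inT 1%N erefl); rewrite E.
    by [].
pose P k := `[< exists G, Fam G /\ chromatic G = k >].
have exP : exists k, P k.
  by case: hex => G FG; exists (chromatic G); apply/asboolP; exists G.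
case: (ex_minnP exP) => k /asboolP [G0 [FG0 cG0]] kmin.
have kle : forall G, Fam G -> (k <= chromatic G)%N.
  by move=> G FG; apply: kmin; apply/asboolP; exists G.
have -> : ereal_inf [set ((chromatic G)%:R)%:E | G in Fam]%classic = (k%:R)%:E :> \bar R.
  apply/eqP; rewrite eq_le; apply/andP; split.
    by apply: ereal_inf_lbound; exists G0; rewrite ?cG0.
  apply/ereal_infP => y [G FG <-]; rewrite lee_fin ler_nat; exact: kle.
have setE : forall l, chiI_set Fam l <-> (0 < l)%N /\ (l < k)%N.
  move=> l; rewrite chiI_setE; split => [[l0 H]|[l0 lk] ]; split => //.
    by rewrite -cG0; apply: H.
  by move=> G FG; apply: leq_trans lk (kle G FG).
set T := (X in ereal_sup X).
have -> : ereal_sup T = ((k.-1)%:R)%:E.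
  apply/eqP; rewrite eq_le; apply/andP; split.
    apply/ereal_supP => y [[l /setE [l0 lk] <-]|->].
      by rewrite lee_fin ler_nat -ltnS (ltn_predK lk).
    by rewrite lee_fin.
  apply: ereal_sup_ubound.
  case: (posnP k.-1) => [->|h]; first by right.
  left; exists k.-1 => //; apply/setE; split => //.
  by case: k {kmin kle setE cG0 exP P T} h.
case: k {kmin kle setE cG0 exP P T} => [|k] /=.
  by rewrite add0e max_r // lee_fin.
rewrite max_l; last by rewrite lee_fin ler1n.
by rewrite -EFinD -natr1.
Qed.
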